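(* Let $G$ act properly on a countable set $S$. Then for every invariant $m:S\times S\to[0,\infty]$, $$\sum_{b,b'\in O}\sum_{s\in Gb'}m(b,s)\,\lambda(G_{s,s})=\sum_{b,b'\in O}\sum_{s\in Gb'}\lambda(G_{b',b'})\,m(s,b),$$ and if $G$ is unimodular, moreover $$\sum_{b\in O}\frac{1}{\lambda(G_{b,b})}\sum_{s\in S}m(b,s)=\sum_{b\in O}\frac{1}{\lambda(G_{b,b})}\sum_{s\in S}m(s,b).$$
   Context: $G$ is a locally compact second countable Hausdorff group with left Haar measure $\lambda$. $S$ is countable (with its power set), $G$ acts measurably on $S$, and the action is proper: with $\mu_s$ the image of $\lambda$ under $g\mapsto gs$, there is a partition $B_1,B_2,\dots$ of $S$ with $\mu_s(B_n)<\infty$ for all $s,n$. $G_{s,t}=\{g:gs=t\}$. $O$ is a system of representatives of the orbits $Gs$. $m$ is invariant if $m(gs,gt)=m(s,t)$ for all $g,s,t$. $G$ is unimodular if its left Haar measure is also right invariant. *)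

(* Defs.v *)
From HB Require Import structures.
From mathcomp Require Import all_boot all_order all_algebra.
From mathcomp Require Import all_classical all_reals all_analysis.
Set Implicit Arguments. Unset Strict Implicit. Unset Printing Implicit Defensive.
Import Order.TTheory GRing.Theory Num.Theory.
Local Open Scope classical_set_scope.
Local Open Scope ring_scope.
Local Open Scope ereal_scope.

Definition borel_of (G : ptopologicalType) :=
  g_sigma_algebraType (@open G).

Definition lcsc_group (G : ptopologicalType) (mul : G -> G -> G)
    (inv : G -> G) (one : G) : Prop :=
  [/\ (forall x y z, mul x (mul y z) = mul (mul x y) z),
      (forall x, mul one x = x /\ mul x one = x),
      (forall x, mul (inv x) x = one /\ mul x (inv x) = one),
      continuous (fun p : G * G => mul p.1 p.2) /\ continuous inv &
      [/\ locally_compact [set: G], @second_countable G & hausdorff_space G]].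

(* lam is a left Haar measure on the Borel sets of G: a nonzero-on-opens,
   finite-on-compacts, left-invariant Borel measure (for lcsc groups such a
   measure is automatically Radon). *)
Definition left_haar {R : realType} (G : ptopologicalType) (mul : G -> G -> G)
    (lam : {measure set (borel_of G) -> \bar R}) : Prop :=
  [/\ (forall (g : G) (A : set (borel_of G)), measurable A ->
         lam [set mul g a | a in A] = lam A),
      (forall K : set G, compact K -> lam K < +oo) &
      (forall U : set G, open U -> U !=set0 -> 0 < lam U)].

Definition unimodular {R : realType} (G : ptopologicalType) (mul : G -> G -> G)
    (lam : {measure set (borel_of G) -> \bar R}) : Prop :=
  forall (g : G) (A : set (borel_of G)), measurable A ->
    lam [set mul a g | a in A] = lam A.

Definition measurable_action (G : ptopologicalType) (mul : G -> G -> G)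
    (one : G) (S : Type) (act : G -> S -> S) : Prop :=
  [/\ (forall s, act one s = s),
      (forall g h s, act (mul g h) s = act g (act h s)) &
      (forall (s : S) (T : set S),
         measurable ((fun g : borel_of G => act g s) @^-1` T))].

Definition mu_s {R : realType} (G : ptopologicalType)
    (lam : {measure set (borel_of G) -> \bar R}) (S : Type)
    (act : G -> S -> S) (s : S) (B : set S) : \bar R :=
  lam ((fun g : borel_of G => act g s) @^-1` B).

Definition proper_action {R : realType} (G : ptopologicalType)
    (lam : {measure set (borel_of G) -> \bar R}) (S : Type)
    (act : G -> S -> S) : Prop :=
  exists B : nat -> set S,
    [/\ trivIset [set: nat] B, \bigcup_n B n = [set: S] &
        forall s n, mu_s lam act s (B n) < +oo].

Definition Gst (G S : Type) (act : G -> S -> S) (s t : S) : set G :=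
  [set g | act g s = t].

Definition orbitG (G S : Type) (act : G -> S -> S) (s : S) : set S :=
  [set act g s | g in [set: G]].

Definition orbit_reps (G S : Type) (act : G -> S -> S) (O : set S) : Prop :=
  forall s : S, exists! b, O b /\ orbitG act s b.

Definition invariant_fun (G S : Type) (act : G -> S -> S) {R : realType}
    (m : S -> S -> \bar R) : Prop :=
  forall g s t, m (act g s) (act g t) = m s t.

(* Main.v *)
Set Warnings "-all".
Require Import Defs.
From HB Require Import structures.
From mathcomp Require Import all_boot all_order all_algebra.
From mathcomp Require Import all_classical all_reals all_analysis.
Local Open Scope classical_set_scope.
Local Open Scope ring_scope.
Local Open Scope ereal_scope.
Import Order.TTheory GRing.Theory Num.Theory.
Lemma fsumZl (R : realType) (T : choiceType) (X : set T) (c : \bar R) (a : T -> \bar R) :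
  finite_set X -> (forall i, X i -> 0 <= a i) ->
  c * (\sum_(i \in X) a i) = \sum_(i \in X) (c * a i).
Proof.
move=> fX a0; rewrite !fsbig_finite//= big_seq [in RHS]big_seq.
by rewrite ge0_sume_distrr// => i; rewrite in_fset_set// inE => /a0.
Qed.

Lemma esumZl_le (R : realType) (T : choiceType) (I : set T) (c : \bar R) (a : T -> \bar R) :
  0 <= c -> (forall i, I i -> 0 <= a i) ->
  \esum_(i in I) (c * a i) <= c * (\esum_(i in I) a i).
Proof.
move=> c0 a0; apply: ge_ereal_sup => _ [X [fX XI] <-].
rewrite -fsumZl//; last by move=> i /XI /a0.
apply: lee_wpmul2l => //; apply: ereal_sup_ubound; exists X => //.
Qed.

Lemma esumZl (R : realType) (T : choiceType) (I : set T) (c : \bar R) (a : T -> \bar R) :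
  0 <= c -> (forall i, I i -> 0 <= a i) ->
  c * (\esum_(i in I) a i) = \esum_(i in I) (c * a i).
Proof.
move=> c0 a0; apply/eqP; rewrite eq_le; apply/andP; split; last exact: esumZl_le.
case: c c0 => [r| |] //; last first.
  move=> _; have [->|] := eqVneq (\esum_(i in I) a i) 0.
    by rewrite mule0 esum_ge0// => i Ii; rewrite mule_ge0// a0.
  move=> ne0; have : 0 < \esum_(i in I) a i by rewrite lt0e ne0 esum_ge0.
  move=> /ereal_sup_gt[_ [X [fX XI] <-] X0].
  have pos : 0 < \esum_(i in I) a i by rewrite lt0e ne0 esum_ge0.
  rewrite gt0_mulye//; apply: esum_ge; exists X => //.
  by rewrite -fsumZl ?gt0_mulye// => i /XI /a0.
rewrite lee_fin => r0'; have [r0|r0] : (r = 0%R) \/ (0 < r)%R.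
  by move: r0'; rewrite le_eqVlt => /orP[/eqP<-|]; [left|right].
  rewrite r0.
  by rewrite mul0e esum_ge0// => i Ii; rewrite mul0e.
have le : \esum_(i in I) a i <= r^-1%:E * \esum_(i in I) (r%:E * a i).
  rewrite [X in X <= _](_ : _ = \esum_(i in I) (r^-1%:E * (r%:E * a i))).
    apply: esumZl_le; first by rewrite lee_fin invr_ge0.
    by move=> i Ii; rewrite mule_ge0// ?a0// lee_fin.
  by apply: eq_esum => i _; rewrite muleA -EFinM mulVf ?gt_eqF// mul1e.
rewrite (le_trans (lee_wpmul2l _ le))// ?lee_fin//.
by rewrite muleA -EFinM mulfV ?gt_eqF// mul1e.
Qed.
Lemma esum_swap (R : realType) (T1 T2 : choiceType) (I : set T1) (J : set T2)
  (a : T1 -> T2 -> \bar R) :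
  (forall i j, I i -> J j -> 0 <= a i j) ->
  \esum_(i in I) \esum_(j in J) a i j = \esum_(j in J) \esum_(i in I) a i j.
Proof.
move=> a0; rewrite !esum_esum//; last by move=> i j Ji Ij; apply: a0.
rewrite (reindex_esum (J `*`` fun=> I) _ (fun x => (x.2, x.1)))//; split=> //=.
- by move=> [i j] [/=].
- by move=> [i1 i2] [j1 j2] /= _ _ [] -> ->.
- by move=> [i1 i2] [Pi1 Qi2] /=; exists (i2, i1).
Qed.

Lemma meas_esum d (T : measurableType d) (R : realType)
  (mu : {measure set T -> \bar R}) (I : countType) (A : I -> set T) :
  (forall i, measurable (A i)) -> trivIset [set: I] A ->
  mu (\bigcup_(i in [set: I]) A i) = \esum_(i in [set: I]) mu (A i).
Proof.
move=> mA tA.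
pose B n := if @pickle_inv I n is Some i then A i else set0.
have mB n : measurable (B n) by rewrite /B; case: pickle_inv.
have EB : \bigcup_(i in [set: I]) A i = \bigcup_n B n.
  apply/seteqP; split=> x.
    by move=> [i _ Ax]; exists (pickle i) => //; rewrite /B pickleK_inv.
  by move=> [n _]; rewrite /B; case: pickle_inv => // i Ax; exists i.
have tB : trivIset [set: nat] B.
  move=> n1 n2 _ _; rewrite /B.
  case E1: (pickle_inv n1) => [i1|]; last by rewrite set0I => -[].
  case E2: (pickle_inv n2) => [i2|]; last by rewrite setI0 => -[].
  move=> /(tA i1 i2 Logic.I Logic.I) e.
  by have := @pickle_invK I n1; have := @pickle_invK I n2; rewrite E1 E2 e /= => -> ->.
rewrite EB measure_semi_bigcup//; last exact: bigcupT_measurable.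
rewrite nneseries_esumT//.
rewrite (esumID (range (@pickle I))); last by [].
rewrite [X in _ + X]esum1 ?adde0; last first.
  move=> n [_ nr]; rewrite /B; case E: pickle_inv => [i|]; last exact: measure0.
  by exfalso; apply: nr; exists i => //; have := @pickle_invK I n; rewrite E.
rewrite setTI esum_image; last by move=> x y _ _; exact: (pcan_inj (@pickleK_inv I)).
by apply: eq_esum => i _; rewrite /B pickleK_inv.
Qed.

Section Mass.
Variables (R : realType) (G : ptopologicalType) (mul : G -> G -> G) (inv : G -> G)
  (one : G) (lam : {measure set (borel_of G) -> \bar R}) (S : countType)
  (act : G -> S -> S) (m : S -> S -> \bar R).
Hypotheses (mulA : forall x y z, mul x (mul y z) = mul (mul x y) z)
  (mul1 : forall x, mul one x = x) (mulr1 : forall x, mul x one = x) (mulV : forall x, mul (inv x) x = one)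
  (mulVr : forall x, mul x (inv x) = one)
  (act1 : forall s, act one s = s)
  (actM : forall g h s, act (mul g h) s = act g (act h s))
  (actmeas : forall (s : S) (T : set S),
         measurable ((fun g : borel_of G => act g s) @^-1` T))
  (lhaar : forall (g : G) (A : set (borel_of G)), measurable A ->
         lam [set mul g a | a in A] = lam A)
  (m0 : forall s t, 0 <= m s t)
  (minv : forall g s t, m (act g s) (act g t) = m s t).

Lemma actK g s : act (inv g) (act g s) = s.
Proof. by rewrite -actM mulV act1. Qed.

Lemma actKV g s : act g (act (inv g) s) = s.
Proof. by rewrite -actM mulVr act1. Qed.

Lemma measG s t : measurable (Gst act s t : set (borel_of G)).
Proof. exact: (actmeas s [set t]). Qed.

Lemma trivl b' : trivIset [set: S] (fun s => Gst act s b').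
Proof.
by move=> s1 s2 _ _ [g [/= e1 e2]]; rewrite -(actK g s1) -(actK g s2) e1 e2.
Qed.

Lemma trivr b : trivIset [set: S] (fun t => Gst act b t).
Proof. by move=> t1 t2 _ _ [g [/= <- <-]]. Qed.

Lemma coverl b' : \bigcup_(s in [set: S]) Gst act s b' = [set: G].
Proof.
by apply/seteqP; split=> // g _; exists (act (inv g) b') => //; rewrite /Gst/= actKV.
Qed.

Lemma coverr b : \bigcup_(t in [set: S]) Gst act b t = [set: G].
Proof. by apply/seteqP; split=> // g _; exists (act g b). Qed.

Lemma decomp (A : set G) (F : S -> set G) :
  measurable (A : set (borel_of G)) -> (forall t, measurable (F t : set (borel_of G))) ->
  trivIset [set: S] F -> \bigcup_(t in [set: S]) F t = [set: G] ->
  lam A = \esum_(t in [set: S]) lam (A `&` F t).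
Proof.
move=> mA mF tF cF.
have E : A = \bigcup_(t in [set: S]) (A `&` F t).
  by rewrite -setI_bigcupr cF setIT.
rewrite {1}E (@meas_esum _ _ _ lam S (fun t => (A `&` F t : set (borel_of G)))) //.
- by move=> t; apply: measurableI.
- by move=> i j _ _ [g [[_ Fi] [_ Fj]]]; apply: tF => //; exists g.
Qed.


Lemma pairP b b' :
  \esum_(s in [set: S]) (m b s * lam (Gst act s b'))
  = \esum_(t in [set: S]) (m t b' * lam (Gst act b t)).
Proof.
have pt s t : m b s * lam (Gst act s b' `&` Gst act b t)
            = m t b' * lam (Gst act s b' `&` Gst act b t).
  have [[g [/= e1 e2]]|/set0P/negP/negPn/eqP ->] := pselect (Gst act s b' `&` Gst act b t !=set0).
    by rewrite -e1 -e2 minv.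
  by rewrite measure0 !mule0.
transitivity (\esum_(s in [set: S]) \esum_(t in [set: S])
                (m b s * lam (Gst act s b' `&` Gst act b t))).
  apply: eq_esum => s _; rewrite (@decomp (Gst act s b') _ (measG s b') (fun t => measG b t) (trivr b) (coverr b)).
  by rewrite esumZl.
rewrite esum_swap; last by move=> s t _ _; rewrite mule_ge0.
apply: eq_esum => t _.
rewrite (@decomp (Gst act b t) _ (measG b t) (fun s => measG s b') (trivl b') (coverl b')).
by rewrite esumZl//; apply: eq_esum => s _; rewrite pt setIC.
Qed.

Lemma notorb_l s b' : ~ orbitG act b' s -> Gst act s b' = set0.
Proof.
move=> no; apply/seteqP; split=> // g /= e; apply: no.
by exists (inv g) => //; rewrite -e actK.
Qed.

Lemma notorb_r b t : ~ orbitG act b t -> Gst act b t = set0.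
Proof. by move=> no; apply/seteqP; split=> // g /= e; apply: no; exists g. Qed.

Lemma Q1 s b' : orbitG act b' s -> lam (Gst act s b') = lam (Gst act s s).
Proof.
move=> [h _ hb]; rewrite -(@lhaar (inv h) _ (measG s s)); congr (lam _).
apply/seteqP; split=> g /=.
  move=> e; exists (mul h g); first by rewrite /Gst/= actM e.
  by rewrite mulA mulV mul1.
by move=> [a e <-]; rewrite /Gst/= actM e -hb actK.
Qed.

Lemma Q2 b t : orbitG act b t -> lam (Gst act b t) = lam (Gst act b b).
Proof.
move=> [h _ hb]; rewrite -(@lhaar h _ (measG b b)); congr (lam _).
apply/seteqP; split=> g /=.
  move=> e; exists (mul (inv h) g); first by rewrite /Gst/= actM e -hb actK.
  by rewrite mulA mulVr mul1.
by move=> [a e <-]; rewrite /Gst/= actM e.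
Qed.

Lemma orb_mkcond b (f g : S -> \bar R) :
  (forall s, orbitG act b s -> f s = g s) -> (forall s, ~ orbitG act b s -> g s = 0) ->
  \esum_(s in orbitG act b) f s = \esum_(s in [set: S]) g s.
Proof.
move=> fg g0; rewrite esum_mkcond; apply: eq_esum => s _.
case: ifPn => [/set_mem/fg //|]; rewrite notin_setE => /g0 ->//.
Qed.

Lemma pair_orb b b' :
  \esum_(s in orbitG act b') (m b s * lam (Gst act s s))
  = \esum_(t in orbitG act b) (m t b' * lam (Gst act b b)).
Proof.
rewrite (@orb_mkcond b' _ (fun s => m b s * lam (Gst act s b'))); last first.
- by move=> s /notorb_l ->; rewrite measure0 mule0.
- by move=> s /Q1 ->.
rewrite (@orb_mkcond b _ (fun t => m t b' * lam (Gst act b t))); last first.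
- by move=> s /notorb_r ->; rewrite measure0 mule0.
- by move=> s /Q2 ->.
exact: pairP.
Qed.

Lemma Q3 (runi : forall (g : G) (A : set (borel_of G)), measurable A ->
    lam [set mul a g | a in A] = lam A) b s :
  orbitG act b s -> lam (Gst act s s) = lam (Gst act b b).
Proof.
move=> ob; rewrite -(@Q2 _ _ ob); move: ob => [h _ hb].
rewrite -(@runi (inv h) _ (measG b s)); congr (lam _).
apply/seteqP; split=> g /=.
  move=> e; exists (mul g h); first by rewrite /Gst/= actM hb.
  by rewrite -mulA mulVr mulr1.
by move=> [a e <-]; rewrite /Gst/= actM -{1}hb actK.
Qed.

Lemma lam_pos b : 0 < lam [set: G] -> 0 < lam (Gst act b b).
Proof.
move=> T0; rewrite lt0e measure_ge0 andbT; apply/negP => /eqP Z.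
move: T0; rewrite (@decomp [set: G] _ measurableT (fun t => measG b t) (trivr b) (coverr b)).
rewrite esum1 ?ltxx// => t _; rewrite setTI.
have [ob|nob] := pselect (orbitG act b t); first by rewrite Q2.
by rewrite notorb_r// measure0.
Qed.

Lemma esum_part (O : set S) (f : S -> \bar R) : (forall s, 0 <= f s) ->
  orbit_reps act O ->
  \esum_(s in [set: S]) f s = \esum_(b in O) \esum_(s in orbitG act b) f s.
Proof.
move=> f0 rO; rewrite esum_esum//.
rewrite (reindex_esum (O `*`` orbitG act) [set: S] snd)//; split=> //=.
- move=> [b1 s1] [b2 s2]; rewrite !inE /= => -[Ob1 [g1 _ e1]] [Ob2 [g2 _ e2]] es.
  rewrite -es in e2; have [x [_ ux]] := rO s1.
  have h1 : O b1 /\ orbitG act s1 b1 by split=> //; exists (inv g1) => //; rewrite -e1 actK.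
  have h2 : O b2 /\ orbitG act s1 b2 by split=> //; exists (inv g2) => //; rewrite -e2 actK.
  by rewrite -(ux _ h1) -(ux _ h2) es.
- move=> s _; have [x [[Ox [g _ e]] _]] := rO s.
  by exists (x, s) => //; split=> //; exists (inv g) => //; rewrite -e actK.
Qed.

Lemma part1 (O : set S) :
  \esum_(b in O) \esum_(b' in O) \esum_(s in orbitG act b')
      (m b s * lam (Gst act s s))
   = \esum_(b in O) \esum_(b' in O) \esum_(s in orbitG act b')
      (lam (Gst act b' b') * m s b).
Proof.
transitivity (\esum_(b in O) \esum_(b' in O) \esum_(t in orbitG act b)
      (m t b' * lam (Gst act b b))).
  by apply: eq_esum => b _; apply: eq_esum => b' _; apply: pair_orb.
rewrite esum_swap; last by move=> *; apply: esum_ge0 => *; rewrite mule_ge0.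
apply: eq_esum => b _; apply: eq_esum => b' _; apply: eq_esum => s _.
by rewrite muleC.
Qed.

Lemma posfin (x : \bar R) : 0 < x -> x < +oo -> exists r : R, (0 < r)%R /\ x = r%:E.
Proof. by case: x => [r| |] //; rewrite lte_fin => r0 _; exists r. Qed.

Lemma P2 (runi : forall (g : G) (A : set (borel_of G)), measurable A ->
    lam [set mul a g | a in A] = lam A) b b' :
  0 < lam (Gst act b b) -> lam (Gst act b b) < +oo ->
  0 < lam (Gst act b' b') -> lam (Gst act b' b') < +oo ->
  \esum_(s in orbitG act b') ((lam (Gst act b b))^-1 * m b s)
  = \esum_(t in orbitG act b) ((lam (Gst act b' b'))^-1 * m t b').
Proof.
move=> p1 f1 p2 f2; have := pair_orb b b'.
rewrite (@eq_esum _ _ _ _ (fun s => lam (Gst act b' b') * m b s)); last first.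
  by move=> s sb; rewrite (@Q3 runi _ _ sb) muleC.
rewrite (@eq_esum _ _ _ (fun t => m t b' * lam (Gst act b b)) (fun t => lam (Gst act b b) * m t b')); last first.
  by move=> t _; rewrite muleC.
have [r [r0 ->]] := @posfin _ p1 f1; have [r' [r'0 ->]] := @posfin _ p2 f2.
have rn : r != 0%R by rewrite gt_eqF.
have r'n : r' != 0%R by rewrite gt_eqF.
rewrite !inver (negPf rn) (negPf r'n).
rewrite -(@esumZl _ _ _ r'%:E (fun s => m b s)) ?lee_fin ?ltW//.
rewrite -(@esumZl _ _ _ r%:E (fun t => m t b')) ?lee_fin ?ltW//.
rewrite -(@esumZl _ _ _ (r^-1)%:E (fun s => m b s)) ?lee_fin ?invr_ge0 ?ltW//.
rewrite -(@esumZl _ _ _ (r'^-1)%:E (fun t => m t b')) ?lee_fin ?invr_ge0 ?ltW//.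
move=> E.
set A := \esum_(s in _) _ in E *; set B := \esum_(t in _) _ in E *.
rewrite -[A]mul1e -(mulVf r'n) EFinM -muleA E.
by rewrite !muleA -!EFinM mulrAC mulVf ?gt_eqF// mul1r.
Qed.

Lemma part2 (O : set S) (rO : orbit_reps act O)
  (runi : forall (g : G) (A : set (borel_of G)), measurable A ->
    lam [set mul a g | a in A] = lam A)
  (pos : forall b, O b -> 0 < lam (Gst act b b))
  (fin : forall b, O b -> lam (Gst act b b) < +oo) :
   \esum_(b in O) ((lam (Gst act b b))^-1 * \esum_(s in [set: S]) m b s)
   = \esum_(b in O) ((lam (Gst act b b))^-1 * \esum_(s in [set: S]) m s b).
Proof.
have c0 b : O b -> 0 <= (lam (Gst act b b))^-1.
  move=> Ob; have [r [r0 ->]] := @posfin _ (pos b Ob) (fin b Ob).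
  by rewrite inver gt_eqF// lee_fin invr_ge0 ltW.
transitivity (\esum_(b in O) \esum_(b' in O) \esum_(s in orbitG act b')
                 ((lam (Gst act b b))^-1 * m b s)).
  apply: eq_esum => b Ob; rewrite esumZl ?c0// (@esum_part O _ _ rO)//.
  by move=> s; rewrite mule_ge0// c0.
transitivity (\esum_(b in O) \esum_(b' in O) \esum_(t in orbitG act b)
                 ((lam (Gst act b' b'))^-1 * m t b')).
  apply: eq_esum => b Ob; apply: eq_esum => b' Ob'.
  by apply: P2 => //; [apply: pos|apply: fin|apply: pos|apply: fin].
rewrite esum_swap; last first.
  by move=> b b' Ob Ob'; apply: esum_ge0 => t _; rewrite mule_ge0// c0.
apply: eq_esum => b Ob.
rewrite (@esum_part O (fun s => m s b) _ rO)// esumZl ?c0//; last first.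
  by move=> b' _; apply: esum_ge0.
apply: eq_esum => b' _; rewrite esumZl ?c0//.
Qed.

End Mass.

Theorem corollary6p6 (R : realType) (G : ptopologicalType)
  (mul : G -> G -> G) (inv : G -> G) (one : G)
  (lam : {measure set (borel_of G) -> \bar R})
  (S : countType) (act : G -> S -> S) (O : set S)
  (m : S -> S -> \bar R) :
  lcsc_group mul inv one ->
  left_haar mul lam ->
  measurable_action mul one act ->
  proper_action lam act ->
  orbit_reps act O ->
  (forall s t, 0 <= m s t) ->
  invariant_fun act m ->
  (\esum_(b in O) \esum_(b' in O) \esum_(s in orbitG act b')
      (m b s * lam (Gst act s s))
   = \esum_(b in O) \esum_(b' in O) \esum_(s in orbitG act b')
      (lam (Gst act b' b') * m s b))
  /\
  (unimodular mul lam ->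
   \esum_(b in O) ((lam (Gst act b b))^-1 * \esum_(s in [set: S]) m b s)
   = \esum_(b in O) ((lam (Gst act b b))^-1 * \esum_(s in [set: S]) m s b)).
Proof.
move=> [hA hI hV _ _] [lh _ hop] [a1 aM amea] [B [tB cB fB]] rO m0 minv.
have mul1 x : mul one x = x by have [] := hI x.
have mulr1 x : mul x one = x by have [] := hI x.
have mulV x : mul (inv x) x = one by have [] := hV x.
have mulVr x : mul x (inv x) = one by have [] := hV x.
split.
  exact: (part1 _ _ _ _ _ _ _ _ _ hA mul1 mulV mulVr a1 aM amea lh m0 minv O).
move=> runi.
apply: (part2 _ _ _ _ _ _ _ _ _ hA mul1 mulr1 mulV mulVr a1 aM amea lh m0 minv O rO runi).
- move=> b _; apply: (lam_pos _ _ _ _ _ _ _ _ hA mul1 mulV mulVr a1 aM amea lh).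
  by apply: hop; [exact: openT | exists point].
- move=> b _.
  have : [set: S] b by [].
  rewrite -cB => -[n _ Bn].
  apply: (le_lt_trans _ (fB b n)); rewrite /mu_s.
  apply: le_measure; rewrite ?inE; [exact: (amea b [set b]) | exact: amea |].
  by move=> g /= ->.
Qed.
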